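(* Let $(x,q)\in\mathbf J$. Then $(x,q)$ belongs to the closure $\overline{\mathbf U}$ (in $\mathbb R^2$) of $\mathbf U$ if and only if $$\overline{a_{n+1}(x,q)a_{n+2}(x,q)\ldots}\le \alpha_1(q)\alpha_2(q)\ldots\quad\text{(lexicographically) for every } n\ge1 \text{ with } a_n(x,q)>0.$$
   Context: For real $q>1$ let $\lceil q\rceil$ be the smallest integer $\ge q$ and $A_q=\{0,1,\ldots,\lceil q\rceil-1\}$. An expansion of $x$ in base $q$ is a sequence $(c_i)_{i\ge1}$ with $c_i\in A_q$ and $x=\sum_{i\ge1}c_iq^{-i}$. Let $\mathbf J$ be the set of $(x,q)\in\mathbb R\times(1,\infty)$ such that $x$ has at least one expansion in base $q$; equivalently $q>1$ and $x\in J_q:=[0,(\lceil q\rceil-1)/(q-1)]$. Let $\mathbf U$ be the set of $(x,q)\in\mathbf J$ such that $x$ has exactly one expansion in base $q$. For $(x,q)\in\mathbf J$, the quasi-greedy expansion $(a_i(x,q))$ is defined as follows: if $x=0$ it is $0^\infty$; if $x>0$ and $a_1(x,q),\ldots,a_{n-1}(x,q)$ are defined, $a_n(x,q)$ is the largest element of $A_q$ with $\sum_{i=1}^n a_i(x,q)q^{-i}<x$. Set $\alpha_i(q):=a_i(1,q)$; note $\alpha_1(q)=\lceil q\rceil-1$. The conjugate of a digit is $\overline{a_i(x,q)}:=\alpha_1(q)-a_i(x,q)$, and for a sequence $\overline{c_1c_2\ldots}:=\overline{c_1}\,\overline{c_2}\ldots$. Sequences are compared in the lexicographic order. *)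

(* Defs.v *)
From Stdlib Require Import Reals Lra Lia.
Open Scope R_scope.

(* Sequences of digits are functions nat -> nat, indexed from 1:
   the value at index 0 is ignored. *)

(* ceil q = smallest integer >= q  (= - floor(-q)); as a nat (q > 1). *)
Definition ceilq (q : R) : nat := Z.to_nat (- Int_part (- q))%Z.

(* largest digit of A_q = {0,...,ceil q - 1} *)
Definition maxdigit (q : R) : nat := (ceilq q - 1)%nat.

Definition is_expansion (q x : R) (c : nat -> nat) : Prop :=
  (forall i, (1 <= i)%nat -> (c i <= maxdigit q)%nat) /\
  infinite_sum (fun k => INR (c (S k)) / q ^ (S k)) x.

Definition inJ (x q : R) : Prop := 1 < q /\ exists c, is_expansion q x c.

Definition inU (x q : R) : Prop :=
  inJ x q /\
  forall c d, is_expansion q x c -> is_expansion q x d ->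
    forall i, (1 <= i)%nat -> c i = d i.

(* closure of U in R^2 (sup-norm balls, giving the usual topology of R^2) *)
Definition in_closure_U (x q : R) : Prop :=
  forall eps, 0 < eps ->
    exists y r, inU y r /\ Rabs (x - y) < eps /\ Rabs (q - r) < eps.

(* largest d in {0..m} satisfying P (0 if none of 1..m does) *)
Fixpoint largest_upto (P : nat -> bool) (m : nat) : nat :=
  match m with
  | O => O
  | S k => if P (S k) then S k else largest_upto P k
  end.

Definition qg_pick (x q s : R) (n : nat) : nat :=
  largest_upto (fun d => if Rlt_dec (s + INR d / q ^ n) x then true else false)
    (maxdigit q).

(* partial sums sum_{i=1}^n a_i(x,q) q^{-i} of the quasi-greedy expansion (x > 0) *)
Fixpoint qg_sum (x q : R) (n : nat) : R :=
  match n with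
  | O => 0
  | S k => qg_sum x q k + INR (qg_pick x q (qg_sum x q k) (S k)) / q ^ (S k)
  end.

Definition qg_digit (x q : R) (n : nat) : nat :=
  match n with
  | O => O
  | S k => if Req_EM_T x 0 then O else qg_pick x q (qg_sum x q k) (S k)
  end.

Definition alpha (q : R) (n : nat) : nat := qg_digit 1 q n.

(* lexicographic order u <= v on infinite sequences (indexed from 0) *)
Definition lex_le (u v : nat -> nat) : Prop :=
  (forall i, u i = v i) \/
  exists k, (forall i, (i < k)%nat -> u i = v i) /\ (u k < v k)%nat.

(* Main.v *)
Require Import Defs.
From Stdlib Require Import Reals Lra Lia ZArith.
Open Scope R_scope.

Lemma maxdigit_eq (r : R) (j : nat) : INR j < r -> r <= INR j + 1 -> maxdigit r = j.
Proof.
  intros H1 H2. unfold maxdigit, ceilq, Int_part.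
  assert (E : up (- r) = (- Z.of_nat j)%Z).
  { symmetry. apply tech_up; rewrite opp_IZR, <- INR_IZR_INZ; lra. }
  rewrite E. replace (- (- Z.of_nat j - 1))%Z with (Z.of_nat (S j)) by lia.
  rewrite Nat2Z.id. lia.
Qed.

Lemma maxdigit_spec (q : R) : 1 < q ->
  INR (maxdigit q) < q /\ q <= INR (maxdigit q) + 1 /\ (1 <= maxdigit q)%nat.
Proof.
  intros Hq. unfold maxdigit, ceilq, Int_part.
  destruct (archimed (- q)) as [H1 H2].
  set (z := up (- q)) in *.
  assert (Hk : (2 <= - (z - 1))%Z).
  { assert (IZR z < 0) by lra. assert (z < 0)%Z by (apply lt_IZR; lra).
    lia. }
  set (k := (- (z - 1))%Z) in *.
  assert (Ek : IZR k = 1 - IZR z) by (unfold k; rewrite opp_IZR, minus_IZR; lra).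
  assert (E2 : INR (Z.to_nat k - 1) = IZR k - 1).
  { rewrite minus_INR by lia. rewrite INR_IZR_INZ, Z2Nat.id by lia. simpl; lra. }
  rewrite E2. repeat split; try lra. lia.
Qed.

Lemma largest_upto_spec (P : nat -> bool) (m : nat) :
  (largest_upto P m <= m)%nat /\
  (largest_upto P m = O \/ P (largest_upto P m) = true) /\
  (forall d, (largest_upto P m < d <= m)%nat -> P d = false).
Proof.
  induction m as [|m IH]; simpl.
  - split; [lia|]. split; [now left|]. intros; lia.
  - destruct (P (S m)) eqn:E.
    + split; [lia|]. split; [now right|]. intros; lia.
    + destruct IH as [H1 [H2 H3]]. split; [lia|]. split; [exact H2|].
      intros d Hd. destruct (Nat.eq_dec d (S m)) as [->|Hne]; [exact E|]. apply H3; lia.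
Qed.

Fixpoint path (q w : R) (c : nat -> nat) (N : nat) : R :=
  match N with O => w | S k => q * path q w c k - INR (c (S k)) end.

Definition QG (q : R) (m : nat) (rho : nat -> R) (d : nat -> nat) : Prop :=
  forall N, (d (S N) <= m)%nat /\ INR (d (S N)) < q * rho N /\
    (d (S N) = m \/ q * rho N <= INR (d (S N)) + 1) /\
    rho (S N) = q * rho N - INR (d (S N)).

Lemma path_qg_sum (x q : R) (N : nat) : 1 < q -> x <> 0 ->
  path q x (qg_digit x q) N = q ^ N * (x - qg_sum x q N).
Proof.
  intros Hq Hx. induction N as [|N IH]; simpl.
  - lra.
  - rewrite IH. unfold qg_digit. destruct (Req_EM_T x 0); [contradiction|].
    set (d := INR _). assert (q ^ N <> 0) by (apply pow_nonzero; lra).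
    field. lra.
Qed.

Lemma qg_step (x q : R) (N : nat) : 1 < q -> x <> 0 ->
  0 < path q x (qg_digit x q) N ->
  let a := qg_digit x q (S N) in let rho := path q x (qg_digit x q) N in
  (a <= maxdigit q)%nat /\ INR a < q * rho /\ (a = maxdigit q \/ q * rho <= INR a + 1).
Proof.
  intros Hq Hx Hpos a rho. change (0 < rho) in Hpos.
  assert (Ea : a = qg_pick x q (qg_sum x q N) (S N)).
  { unfold a, qg_digit. destruct (Req_EM_T x 0); [contradiction|reflexivity]. }
  assert (Erho : rho = q ^ N * (x - qg_sum x q N)) by (apply path_qg_sum; auto).
  assert (HqN : 0 < q ^ N) by (apply pow_lt; lra).
  assert (Key : forall d : nat, (if Rlt_dec (qg_sum x q N + INR d / q ^ S N) x then true else false) = true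
                 <-> INR d < q * rho).
  { intro d. destruct (Rlt_dec _ _) as [H|H]; split; intro H'; try easy.
    - rewrite Erho. simpl in H. apply Rmult_lt_reg_r with (/ (q * q ^ N)).
      apply Rinv_0_lt_compat; nra.
      replace (q * (q ^ N * (x - qg_sum x q N)) * / (q * q ^ N)) with (x - qg_sum x q N) by (field; lra).
      unfold Rdiv in H. lra.
    - exfalso. apply H. rewrite Erho in H'. simpl.
      assert (INR d / (q * q ^ N) < x - qg_sum x q N); [|lra].
      apply Rmult_lt_reg_r with (q * q ^ N). nra.
      replace (INR d / (q * q ^ N) * (q * q ^ N)) with (INR d) by (field; lra). nra. }
  destruct (largest_upto_spec (fun d => if Rlt_dec (qg_sum x q N + INR d / q ^ S N) x then true else false) (maxdigit q))
    as [H1 [H2 H3]].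
  fold (qg_pick x q (qg_sum x q N) (S N)) in H1, H2, H3. rewrite <- Ea in H1, H2, H3.
  split; [exact H1|]. split.
  - destruct H2 as [H2|H2]. rewrite H2. simpl. nra. now apply Key.
  - destruct (Nat.eq_dec a (maxdigit q)) as [E|E]; [now left|right].
    assert (Hf := H3 (S a) ltac:(lia)).
    destruct (Rle_lt_dec (q * rho) (INR a + 1)) as [Hl|Hl]; [exact Hl|].
    exfalso. assert (INR (S a) < q * rho) by (rewrite S_INR; lra).
    apply Key in H. rewrite H in Hf. discriminate.
Qed.

Lemma qg_QG (x q : R) : 1 < q -> 0 < x ->
  QG q (maxdigit q) (path q x (qg_digit x q)) (qg_digit x q) /\
  forall N, 0 < path q x (qg_digit x q) N.
Proof.
  intros Hq Hx.
  assert (Hpos : forall N, 0 < path q x (qg_digit x q) N).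
  { induction N as [|N IH]; cbn [path]; [lra|].
    destruct (qg_step x q N Hq (Rgt_not_eq _ _ Hx) IH) as [_ [H _]]. lra. }
  split; [|exact Hpos]. intro N.
  destruct (qg_step x q N Hq (Rgt_not_eq _ _ Hx) (Hpos N)) as [H1 [H2 H3]].
  repeat split; auto.
Qed.

Definition Tq (q : R) : R := INR (maxdigit q) / (q - 1).

Lemma Tq_ge1 (q : R) : 1 < q -> 1 <= Tq q.
Proof.
  intros Hq. destruct (maxdigit_spec q Hq) as [H1 [H2 H3]]. unfold Tq.
  apply Rmult_le_reg_r with (q - 1); [lra|]. unfold Rdiv. rewrite Rmult_assoc, Rinv_l by lra. lra.
Qed.

Lemma Tq_fix (q : R) : 1 < q -> q * Tq q - INR (maxdigit q) = Tq q.
Proof. intros Hq. unfold Tq. field. lra. Qed.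

Lemma QG_pos q m rho d : QG q m rho d -> forall N, 0 < rho (S N).
Proof. intros H N. destruct (H N) as [_ [H2 [_ H4]]]. lra. Qed.

Lemma QG_nonneg q m rho d : QG q m rho d -> 0 <= rho O -> forall N, 0 <= rho N.
Proof. intros H H0 [|N]; [exact H0|]. apply Rlt_le, (QG_pos _ _ _ _ H). Qed.

Lemma QG_le_T q rho d : 1 < q -> QG q (maxdigit q) rho d -> rho O <= Tq q -> forall N, rho N <= Tq q.
Proof.
  intros Hq H H0. induction N as [|N IH]; [exact H0|].
  destruct (H N) as [H1 [H2 [H3 H4]]]. rewrite H4.
  assert (HT := Tq_fix q Hq). assert (HT1 := Tq_ge1 q Hq).
  destruct H3 as [H3|H3].
  - rewrite H3. nra.
  - lra.
Qed.

Lemma QG_shift q m rho d k : QG q m rho d -> QG q m (fun N => rho (k + N)%nat) (fun i => d (k + i)%nat).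
Proof.
  intros H N. replace (k + S N)%nat with (S (k + N)) by lia. apply H.
Qed.

Lemma QG_path q m rho d : QG q m rho d -> forall N, rho N = path q (rho O) d N.
Proof.
  intros H. induction N as [|N IH]; [reflexivity|].
  cbn [path]. rewrite <- IH. apply H.
Qed.

Lemma path_diff q w v c e j : (forall i, (1 <= i <= j)%nat -> c i = e i) ->
  path q w c j - path q v e j = q ^ j * (w - v).
Proof.
  induction j as [|j IH]; intros Hce; cbn [path pow]; [lra|].
  rewrite Hce by lia.
  replace (q * q ^ j * (w - v)) with (q * (q ^ j * (w - v))) by ring.
  rewrite <- IH by (intros; apply Hce; lia). ring.
Qed.

Lemma path_shift q w c k N : path q (path q w c k) (fun i => c (k + i)%nat) N = path q w c (k + N).
Proof.
  induction N as [|N IH]; cbn [path].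
  - now rewrite Nat.add_0_r.
  - rewrite IH. replace (k + S N)%nat with (S (k + N)) by lia. reflexivity.
Qed.

Lemma path_conj q w c m T N : (forall i, (1 <= i)%nat -> (c i <= m)%nat) -> q * T - INR m = T ->
  path q (T - w) (fun i => m - c i)%nat N = T - path q w c N.
Proof.
  intros Hc HT. induction N as [|N IH]; cbn [path]; [reflexivity|].
  rewrite IH, minus_INR by (apply Hc; lia). lra.
Qed.

Fixpoint Ssum (q : R) (c : nat -> nat) (N : nat) : R :=
  match N with O => 0 | S k => Ssum q c k + INR (c (S k)) / q ^ (S k) end.

Lemma sum_Ssum q c N : sum_f_R0 (fun k => INR (c (S k)) / q ^ (S k)) N = Ssum q c (S N).
Proof. induction N as [|N IH]; cbn [sum_f_R0 Ssum]; [lra|]. rewrite IH. cbn [Ssum]. reflexivity. Qed.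

Lemma path_Ssum q x c N : 1 < q -> path q x c N = q ^ N * (x - Ssum q c N).
Proof.
  intros Hq. induction N as [|N IH]; cbn [path Ssum pow]; [lra|].
  rewrite IH. assert (q ^ N <> 0) by (apply pow_nonzero; lra). field; lra.
Qed.

Lemma Ssum_bound q c N M : 1 < q -> (forall i, (1 <= i)%nat -> (c i <= maxdigit q)%nat) -> (N <= M)%nat ->
  Ssum q c N <= Ssum q c M /\ Ssum q c M + Tq q / q ^ M <= Ssum q c N + Tq q / q ^ N.
Proof.
  intros Hq Hc HNM. induction HNM as [|M HNM IH]; [lra|].
  cbn [Ssum]. assert (Hd : INR (c (S M)) <= INR (maxdigit q)) by (apply le_INR, Hc; lia).
  assert (HqM : 0 < q ^ M) by (apply pow_lt; lra).
  assert (Hd0 : 0 <= INR (c (S M))) by apply pos_INR.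
  assert (HT := Tq_fix q Hq).
  split.
  - assert (0 <= INR (c (S M)) / q ^ S M) by (apply Rmult_le_pos; auto; left; apply Rinv_0_lt_compat, pow_lt; lra). lra.
  - assert (E : INR (c (S M)) / q ^ S M + Tq q / q ^ S M <= Tq q / q ^ M).
    { cbn [pow]. replace (INR (c (S M)) / (q * q ^ M) + Tq q / (q * q ^ M)) with
        ((INR (c (S M)) + Tq q) / q / q ^ M) by (field; lra).
      unfold Rdiv. apply Rmult_le_compat_r; [left; apply Rinv_0_lt_compat; lra|].
      apply Rmult_le_reg_r with q; [lra|]. rewrite Rmult_assoc, Rinv_l by lra. lra. }
    lra.
Qed.

Lemma cv_bounds u l a b n0 : Un_cv u l -> (forall n, (n0 <= n)%nat -> a <= u n <= b) -> a <= l <= b.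
Proof.
  intros Hcv Hb. split.
  - destruct (Rle_lt_dec a l) as [H|H]; [exact H|exfalso].
    destruct (Hcv (a - l) ltac:(lra)) as [N HN].
    specialize (HN (max N n0) ltac:(lia)). specialize (Hb (max N n0) ltac:(lia)).
    unfold Rdist in HN. apply Rabs_def2 in HN. lra.
  - destruct (Rle_lt_dec l b) as [H|H]; [exact H|exfalso].
    destruct (Hcv (l - b) ltac:(lra)) as [N HN].
    specialize (HN (max N n0) ltac:(lia)). specialize (Hb (max N n0) ltac:(lia)).
    unfold Rdist in HN. apply Rabs_def2 in HN. lra.
Qed.

Definition ispath (q w : R) (c : nat -> nat) : Prop :=
  (forall i, (1 <= i)%nat -> (c i <= maxdigit q)%nat) /\ forall N, 0 <= path q w c N <= Tq q.

Lemma small_pow (q e : R) : 1 < q -> 0 < e -> exists N, forall n, (N <= n)%nat -> / q ^ n < e.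
Proof.
  intros Hq He. destruct (pow_lt_1_zero (/ q)) with (y := e) as [N HN].
  { rewrite Rabs_pos_eq. apply (Rmult_lt_reg_l q); [lra|]. rewrite Rinv_r; lra. left; apply Rinv_0_lt_compat; lra. }
  exact He.
  exists N. intros n Hn. specialize (HN n Hn). rewrite <- pow_inv.
  rewrite Rabs_pos_eq in HN; [exact HN|]. apply pow_le. left; apply Rinv_0_lt_compat; lra.
Qed.

Lemma exp_iff (q x : R) (c : nat -> nat) : 1 < q -> (is_expansion q x c <-> ispath q x c).
Proof.
  intros Hq. unfold is_expansion, ispath. split; intros [Hc Hs]; split; auto.
  - intro N. rewrite path_Ssum by exact Hq.
    assert (HqN : 0 < q ^ N) by (apply pow_lt; lra).
    assert (HT1 := Tq_ge1 q Hq).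
    assert (Hb : Ssum q c N <= x <= Ssum q c N + Tq q / q ^ N).
    { apply cv_bounds with (u := sum_f_R0 (fun k => INR (c (S k)) / q ^ S k)) (n0 := N); [exact Hs|].
      intros n Hn. rewrite sum_Ssum. destruct (Ssum_bound q c N (S n) Hq Hc ltac:(lia)) as [H1 H2].
      assert (0 <= Tq q / q ^ S n) by (apply Rmult_le_pos; [lra|left; apply Rinv_0_lt_compat, pow_lt; lra]).
      lra. }
    split. nra.
    replace (Tq q) with (q ^ N * (Tq q / q ^ N)) by (field; lra).
    apply Rmult_le_compat_l; lra.
  - intros eps Heps.
    assert (HT1 := Tq_ge1 q Hq).
    destruct (small_pow q (eps / Tq q) Hq) as [N HN]. { apply Rdiv_lt_0_compat; lra. }
    exists N. intros n Hn. rewrite sum_Ssum. unfold Rdist.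
    specialize (Hs (S n)). rewrite path_Ssum in Hs by exact Hq.
    assert (HqN : 0 < q ^ S n) by (apply pow_lt; lra).
    specialize (HN (S n) ltac:(lia)).
    assert (H1 : 0 <= x - Ssum q c (S n)).
    { destruct Hs as [Hs _]. apply Rmult_le_reg_l with (q ^ S n); lra. }
    assert (H2 : x - Ssum q c (S n) <= Tq q * / q ^ S n).
    { destruct Hs as [_ Hs]. apply Rmult_le_reg_l with (q ^ S n); [lra|].
      replace (q ^ S n * (Tq q * / q ^ S n)) with (Tq q) by (field; lra). exact Hs. }
    rewrite Rabs_minus_sym, Rabs_pos_eq by exact H1.
    apply Rle_lt_trans with (1 := H2).
    replace eps with (Tq q * (eps / Tq q)) by (field; lra).
    apply Rmult_lt_compat_l; lra.
Qed.

Lemma path_ext q w c e k : (forall i, (1 <= i <= k)%nat -> c i = e i) -> path q w c k = path q w e k.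
Proof. intros H. assert (Hd := path_diff q w w c e k H). rewrite Rminus_diag, Rmult_0_r in Hd. lra. Qed.

Lemma qg_zero q i : qg_digit 0 q i = O.
Proof. destruct i; simpl; [reflexivity|]. destruct (Req_EM_T 0 0); [reflexivity|congruence]. Qed.

Lemma qg_ispath x q : 1 < q -> 0 <= x <= Tq q -> ispath q x (qg_digit x q).
Proof.
  intros Hq Hx. destruct (Req_dec x 0) as [->|Hx0].
  - split; [intros; rewrite qg_zero; lia|].
    assert (forall N, path q 0 (qg_digit 0 q) N = 0).
    { induction N as [|N IH]; cbn [path]; [reflexivity|]. rewrite IH, qg_zero. simpl. lra. }
    intro N. rewrite H. assert (HT := Tq_ge1 q Hq). lra.
  - destruct (qg_QG x q Hq ltac:(lra)) as [HQ Hpos]. split.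
    + intros [|i] Hi; [lia|]. apply HQ.
    + intro N. split; [left; apply Hpos|]. apply (QG_le_T q _ _ Hq HQ). simpl. lra.
Qed.

Lemma inJ_bounds x q : inJ x q -> 1 < q /\ 0 <= x <= Tq q.
Proof.
  intros [Hq [c Hc]]. split; [exact Hq|]. apply exp_iff in Hc; [|exact Hq].
  destruct Hc as [_ Hc]. exact (Hc O).
Qed.

Lemma forced y r c N d : inU y r -> ispath r y c -> (d <= maxdigit r)%nat ->
  0 <= r * path r y c N - INR d <= Tq r -> d = c (S N).
Proof.
  intros [[Hr _] HU] Hc Hd Hw.
  set (w' := r * path r y c N - INR d) in *.
  assert (He := qg_ispath w' r Hr Hw). set (e := qg_digit w' r) in *.
  set (c' := fun i => if (i <=? N)%nat then c i else if (i =? S N)%nat then d else e (i - S N)%nat).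
  assert (Hlow : forall j, (j <= N)%nat -> path r y c' j = path r y c j).
  { intros j Hj. apply path_ext. intros i Hi. unfold c'.
    destruct (Nat.leb_spec i N); [reflexivity|lia]. }
  assert (HSN : path r y c' (S N) = w').
  { cbn [path]. rewrite Hlow by lia. unfold c'.
    destruct (Nat.leb_spec (S N) N); [lia|]. rewrite Nat.eqb_refl. reflexivity. }
  assert (Hhigh : forall k, path r y c' (S N + k) = path r w' e k).
  { intro k. rewrite <- path_shift, HSN. apply path_ext. intros i Hi. unfold c'.
    destruct (Nat.leb_spec (S N + i) N); [lia|]. destruct (Nat.eqb_spec (S N + i) (S N)); [lia|].
    f_equal. lia. }
  assert (Hc' : ispath r y c').
  { split.
    - intros i Hi. unfold c'. destruct (Nat.leb_spec i N); [apply Hc; lia|].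
      destruct (Nat.eqb_spec i (S N)); [exact Hd|]. apply He. lia.
    - intro M. destruct (Nat.le_gt_cases M N) as [HM|HM].
      + rewrite Hlow by exact HM. apply Hc.
      + replace M with (S N + (M - S N))%nat by lia. rewrite Hhigh. apply He. }
  apply exp_iff in Hc; [|exact Hr]. apply exp_iff in Hc'; [|exact Hr].
  assert (E := HU c' c Hc' Hc (S N) ltac:(lia)).
  unfold c' in E. destruct (Nat.leb_spec (S N) N); [lia|]. rewrite Nat.eqb_refl in E. exact E.
Qed.

From Stdlib Require Import Classical FunctionalExtensionality.

Definition lt0 (u v : nat -> nat) : Prop :=
  exists k, (forall i, (i < k)%nat -> u i = v i) /\ (u k < v k)%nat.

Lemma ex_min (P : nat -> Prop) : (exists n, P n) -> exists n, P n /\ forall i, (i < n)%nat -> ~ P i.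
Proof.
  intros [n Hn]. revert Hn. induction n as [n IH] using lt_wf_ind. intros Hn.
  destruct (classic (exists i, (i < n)%nat /\ P i)) as [[i [Hi Pi]]|H].
  - exact (IH i Hi Pi).
  - exists n. split; [exact Hn|]. intros i Hi Pi. apply H. eauto.
Qed.

Lemma lex_total u v : lex_le u v \/ lt0 v u.
Proof.
  destruct (classic (forall i, u i = v i)) as [H|H]; [left; now left|].
  apply not_all_ex_not in H. apply ex_min in H as [k [Hk Hmin]].
  assert (Heq : forall i, (i < k)%nat -> u i = v i) by (intros i Hi; apply NNPP; auto).
  destruct (Nat.lt_gt_cases (u k) (v k)) as [[Hl|Hl] _]; [exact Hk|..].
  - left; right. exists k. auto.
  - right. exists k. split; [intros; symmetry; auto|exact Hl].
Qed.

Lemma lex_le_lt_trans u v w : lex_le u v -> lt0 v w -> lt0 u w.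
Proof.
  intros [Huv|[k [Hk Hkl]]] [j [Hj Hjl]].
  - exists j. split; [intros; rewrite Huv; auto|rewrite Huv; exact Hjl].
  - destruct (Nat.lt_ge_cases k j) as [H|H].
    + exists k. split; [intros; rewrite Hk by lia; apply Hj; lia|]. rewrite <- Hj by exact H. exact Hkl.
    + exists j. split; [intros; rewrite Hk by lia; apply Hj; lia|].
      destruct (Nat.eq_dec k j) as [->|Hne]; [lia|]. rewrite Hk by lia. exact Hjl.
Qed.

Lemma lt0_ext u u' v : (forall i, u i = u' i) -> lt0 u v -> lt0 u' v.
Proof. intros H [k [Hk Hl]]. exists k. split; intros; rewrite <- H; auto. Qed.

Section LemmaL.
Variable r : R.
Hypothesis Hr : 1 < r.
Let m := maxdigit r.
Let A := alpha r.

Definition Good (d : nat -> nat) : Prop :=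
  lt0 (fun i => d (S i)) (fun i => A (S i)) /\
  forall j, (1 <= j)%nat -> (d j < m)%nat -> lt0 (fun i => d (j + S i)%nat) (fun i => A (S i)).

Lemma alpha_QG : QG r m (path r 1 A) A /\ forall N, 0 < path r 1 A N.
Proof. apply qg_QG; lra. Qed.

Lemma L_step d w : Good d -> ispath r w d ->
  exists k, (1 <= k)%nat /\ Good (fun i => d (k + i)%nat) /\ ispath r (path r w d k) (fun i => d (k + i)%nat) /\
    r ^ k * (w - 1) < path r w d k - 1.
Proof.
  intros [[k0 [Hk0 Hlt]] Hg] [Hdig Hp].
  destruct alpha_QG as [HQ Hpos].
  assert (HAm : (A (S k0) <= m)%nat) by apply HQ.
  exists (S k0). split; [lia|]. split; [split|split].
  - apply (Hg (S k0)); [lia|lia].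
  - intros j Hj Hdj. apply lt0_ext with (u := fun i => d (S k0 + j + S i)%nat).
    { intros i. f_equal. lia. }
    apply Hg; [lia|exact Hdj].
  - split. intros i Hi; apply Hdig; lia. intro N. rewrite path_shift. apply Hp.
  - assert (Hdf := path_diff r w 1 d A k0 ltac:(intros i Hi; replace i with (S (i - 1)) by lia; apply Hk0; lia)).
    cbn [path]. assert (HS := Hpos (S k0)). cbn [path] in HS.
    assert (INR (d (S k0)) + 1 <= INR (A (S k0))) by (rewrite <- S_INR; apply le_INR; lia).
    replace (r ^ S k0 * (w - 1)) with (r * (r ^ k0 * (w - 1))) by (simpl; ring).
    rewrite <- Hdf. lra.
Qed.

Lemma L_bound : forall t d w, Good d -> ispath r w d -> w <= 1 + Tq r / r ^ t.
Proof.
  induction t as [|t IH]; intros d w Hg Hp.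
  - simpl. destruct Hp as [_ Hp]. specialize (Hp O). simpl in Hp. lra.
  - destruct (L_step d w Hg Hp) as [k [Hk [Hg' [Hp' Hlt]]]].
    specialize (IH _ _ Hg' Hp').
    destruct (Rle_lt_dec w 1) as [Hw|Hw].
    { assert (0 <= Tq r / r ^ S t); [|lra].
      apply Rmult_le_pos. assert (H := Tq_ge1 r Hr). lra. left; apply Rinv_0_lt_compat, pow_lt; lra. }
    assert (Hrk : r <= r ^ k) by (rewrite <- (pow_1 r) at 1; apply Rle_pow; [lra|lia]).
    assert (Hrt : 0 < r ^ t) by (apply pow_lt; lra).
    assert (r * (w - 1) < Tq r / r ^ t) by nra.
    simpl.
    assert (w - 1 < Tq r / (r * r ^ t)); [|lra].
    apply Rmult_lt_reg_l with r; [lra|].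
    replace (r * (Tq r / (r * r ^ t))) with (Tq r / r ^ t) by (field; lra). exact H.
Qed.

Lemma L_le1 d w : Good d -> ispath r w d -> w <= 1.
Proof.
  intros Hg Hp. destruct (Rle_lt_dec w 1) as [H|H]; [exact H|exfalso].
  assert (HT := Tq_ge1 r Hr).
  destruct (small_pow r ((w - 1) / Tq r) Hr) as [N HN]. { apply Rdiv_lt_0_compat; lra. }
  specialize (HN N (le_n N)). assert (Hb := L_bound N d w Hg Hp).
  assert (Tq r / r ^ N < w - 1); [|lra].
  unfold Rdiv at 1. rewrite Rmult_comm.
  apply Rmult_lt_reg_r with (/ Tq r). apply Rinv_0_lt_compat; lra.
  rewrite Rmult_assoc, Rinv_r, Rmult_1_r by lra. exact HN.
Qed.

Lemma L_lt1 d w : Good d -> ispath r w d -> w < 1.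
Proof.
  intros Hg Hp. destruct (L_step d w Hg Hp) as [k [Hk [Hg' [Hp' Hlt]]]].
  assert (H := L_le1 _ _ Hg' Hp'). assert (0 < r ^ k) by (apply pow_lt; lra). nra.
Qed.

End LemmaL.

Lemma unique_crit r y c : 1 < r -> ispath r y c ->
  (forall n, (1 <= n)%nat -> (c n < maxdigit r)%nat ->
     lt0 (fun i => c (n + S i)%nat) (fun i => alpha r (S i))) ->
  (forall n, (1 <= n)%nat -> (0 < c n)%nat ->
     lt0 (fun i => maxdigit r - c (n + S i))%nat (fun i => alpha r (S i))) ->
  inU y r.
Proof.
  intros Hr Hc H1 H2.
  assert (Key : forall e, ispath r y e -> forall i, (1 <= i)%nat -> e i = c i).
  { intros e He. apply NNPP. intro Hne.
    assert (Hex : exists i, (1 <= i)%nat /\ e i <> c i).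
    { apply not_all_ex_not in Hne as [i Hi]. exists i. apply imply_to_and in Hi. exact Hi. }
    apply ex_min in Hex as [k [[Hk1 Hkne] Hmin]].
    assert (Heq : forall i, (1 <= i < k)%nat -> e i = c i).
    { intros i Hi. apply NNPP. intro H. apply (Hmin i); [lia|]. split; [lia|exact H]. }
    destruct k as [|k']; [lia|].
    assert (Hpk : path r y e k' = path r y c k') by (apply path_ext; intros; apply Heq; lia).
    assert (Epe : path r y e (S k') = r * path r y c k' - INR (e (S k'))).
    { cbn [path]. rewrite Hpk. reflexivity. }
    assert (Epc : path r y c (S k') = r * path r y c k' - INR (c (S k'))) by reflexivity.
    set (k := S k') in *.
    destruct He as [Hed Hep]. destruct Hc as [Hcd Hcp].
    assert (Hfix := Tq_fix r Hr).
    destruct (Nat.lt_gt_cases (c k) (e k)) as [[Hl|Hl] _]; [exact (not_eq_sym Hkne)|..].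
    -
      assert (Hck : (c k < maxdigit r)%nat) by (specialize (Hed k Hk1); lia).
      assert (Hg : Good r (fun i => c (k + i)%nat)).
      { split. apply (H1 k Hk1 Hck).
        intros j Hj Hcj. apply lt0_ext with (u := fun i => c (k + j + S i)%nat).
        { intro i. f_equal. lia. }
        apply H1; [lia|exact Hcj]. }
      assert (Hp : ispath r (path r y c k) (fun i => c (k + i)%nat)).
      { split. intros i Hi; apply Hcd; lia. intro N. rewrite path_shift. apply Hcp. }
      assert (HL := L_lt1 r Hr _ _ Hg Hp).
      assert (INR (c k) + 1 <= INR (e k)) by (rewrite <- S_INR; apply le_INR; lia).
      specialize (Hep k). lra.
    -
      assert (Hg : Good r (fun i => maxdigit r - c (k + i))%nat).
      { split. apply (H2 k Hk1); lia.
        intros j Hj Hcj. apply lt0_ext with (u := fun i => (maxdigit r - c (k + j + S i))%nat).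
        { intro i. do 2 f_equal. lia. }
        apply H2; lia. }
      assert (Hp : ispath r (Tq r - path r y c k) (fun i => maxdigit r - c (k + i))%nat).
      { split. intros i Hi; lia. intro N.
        rewrite (path_conj r _ (fun i => c (k + i)%nat) (maxdigit r) (Tq r) N).
        rewrite path_shift. specialize (Hcp (k + N)%nat). lra.
        intros i Hi; apply Hcd; lia. exact Hfix. }
      assert (HL := L_lt1 r Hr _ _ Hg Hp).
      assert (INR (e k) + 1 <= INR (c k)) by (rewrite <- S_INR; apply le_INR; lia).
      specialize (Hep k). lra. }
  split.
  - split; [exact Hr|]. exists c. apply exp_iff; auto.
  - intros c1 c2 Hc1 Hc2 i Hi. apply exp_iff in Hc1, Hc2; auto.
    rewrite (Key c1 Hc1 i Hi), (Key c2 Hc2 i Hi). reflexivity.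
Qed.

Lemma mono q r m rho rho' d d' : QG q m rho d -> QG r m rho' d' -> 0 < q -> q <= r -> 0 <= rho O -> rho O <= rho' O ->
  lex_le (fun i => d (S i)) (fun i => d' (S i)).
Proof.
  intros HQ HQ' Hq0 Hqr H0 H00.
  destruct (lex_total (fun i => d (S i)) (fun i => d' (S i))) as [H|[k [Hk Hl]]]; [exact H|exfalso].
  assert (Hnn := QG_nonneg _ _ _ _ HQ H0).
  assert (Hle : forall j, (j <= k)%nat -> rho j <= rho' j).
  { induction j as [|j IH]; intros Hj; [exact H00|].
    destruct (HQ j) as [_ [_ [_ E1]]]. destruct (HQ' j) as [_ [_ [_ E2]]].
    rewrite E1, E2, (Hk j) by lia. specialize (IH ltac:(lia)). specialize (Hnn j).
    assert (0 <= (r - q) * rho j) by nra. assert (0 <= r * (rho' j - rho j)) by nra. nra. }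
  specialize (Hle k (le_n k)). specialize (Hnn k).
  destruct (HQ k) as [Hd1 [Hd2 _]]. destruct (HQ' k) as [Hd1' [_ [Hd3' _]]].
  simpl in Hl. destruct Hd3' as [E|Hd3'].
  - lia.
  - assert (INR (d (S k)) < INR (d' (S k)) + 1) by nra.
    rewrite <- S_INR in H. apply INR_lt in H. lia.
Qed.

Lemma alpha_1 q : 1 < q -> alpha q 1 = maxdigit q.
Proof.
  intros Hq. destruct (qg_QG 1 q Hq ltac:(lra)) as [HQ _].
  destruct (HQ O) as [H1 [H2 [H3 _]]]. destruct (maxdigit_spec q Hq) as [M1 [M2 M3]].
  unfold alpha. simpl path in *. destruct H3 as [H3|H3]; [exact H3|].
  apply Nat.le_antisymm; [exact H1|].
  assert (INR (maxdigit q) < INR (qg_digit 1 q 1) + 1) by lra.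
  rewrite <- S_INR in H. apply INR_lt in H. lia.
Qed.

Lemma alpha_int q : 1 < q -> q = INR (maxdigit q) + 1 -> forall i, (1 <= i)%nat -> alpha q i = maxdigit q.
Proof.
  intros Hq Eq. destruct (qg_QG 1 q Hq ltac:(lra)) as [HQ _].
  assert (Hall : forall N, path q 1 (alpha q) N = 1 /\ alpha q (S N) = maxdigit q).
  { induction N as [|N IH].
    - split; [reflexivity|]. apply alpha_1; exact Hq.
    - assert (Hp : path q 1 (alpha q) (S N) = 1).
      { destruct IH as [IH1 IH2]. cbn [path]. rewrite IH1, IH2. lra. }
      split; [exact Hp|]. destruct (HQ (S N)) as [H1 [H2 [H3 _]]].
      change (qg_digit 1 q) with (alpha q) in H1, H2, H3. rewrite Hp in H2, H3. destruct H3 as [H3|H3]; [exact H3|].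
      apply Nat.le_antisymm; [exact H1|].
      assert (INR (maxdigit q) < INR (alpha q (S (S N))) + 1) by lra.
      rewrite <- S_INR in H. apply INR_lt in H. lia. }
  intros [|i] Hi; [lia|]. apply Hall.
Qed.

Lemma pow_big (r M : R) : 1 < r -> exists N, M < r ^ N.
Proof.
  intros Hr. destruct (Rle_lt_dec M 0) as [H|H]; [exists O; simpl; lra|].
  destruct (small_pow r (/ M) Hr) as [N HN]; [apply Rinv_0_lt_compat; lra|].
  exists N. specialize (HN N (le_n N)). assert (0 < r ^ N) by (apply pow_lt; lra).
  destruct (Rle_lt_dec (r ^ N) M) as [H2|H2]; [|exact H2].
  assert (/ M <= / r ^ N) by (apply Rinv_le_contravar; lra). lra.
Qed.

Lemma alpha_strict q r : 1 < q -> q < r -> maxdigit q = maxdigit r ->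
  lt0 (fun i => alpha q (S i)) (fun i => alpha r (S i)).
Proof.
  intros Hq Hqr Hm.
  destruct (qg_QG 1 q Hq ltac:(lra)) as [HQ Hpos].
  destruct (qg_QG 1 r ltac:(lra) ltac:(lra)) as [HQ' Hpos'].
  rewrite <- Hm in HQ'.
  destruct (mono q r (maxdigit q) _ _ _ _ HQ HQ' ltac:(lra) ltac:(lra) ltac:(simpl; lra) ltac:(simpl; lra)) as [Heq|H];
    [exfalso|exact H].
  set (rho := path q 1 (qg_digit 1 q)) in *. set (rho' := path r 1 (qg_digit 1 r)) in *.
  assert (He : forall N, (r - q) * r ^ N <= rho' (S N) - rho (S N)).
  { induction N as [|N IH].
    - destruct (HQ O) as [_ [_ [_ E1]]]. destruct (HQ' O) as [_ [_ [_ E2]]].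
      rewrite E1, E2, (Heq O). simpl. unfold rho, rho'. simpl. lra.
    - destruct (HQ (S N)) as [_ [_ [_ E1]]]. destruct (HQ' (S N)) as [_ [_ [_ E2]]].
      rewrite E1, E2, (Heq (S N)). specialize (Hpos (S N)). fold rho in Hpos.
      simpl pow. nra. }
  assert (HT : rho' (S O) <= Tq r).
  { apply (QG_le_T r rho' (qg_digit 1 r)); [lra| |].
    - rewrite Hm in HQ'. exact HQ'.
    - unfold rho'. simpl. assert (H := Tq_ge1 r ltac:(lra)). lra. }
  assert (HTall : forall N, rho' N <= Tq r).
  { apply (QG_le_T r rho' (qg_digit 1 r)); [lra| |].
    - rewrite Hm in HQ'. exact HQ'.
    - unfold rho'. simpl. assert (H := Tq_ge1 r ltac:(lra)). lra. }
  destruct (pow_big r (Tq r / (r - q)) ltac:(lra)) as [N HN].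
  specialize (He N). specialize (HTall (S N)). specialize (Hpos (S N)). fold rho in Hpos.
  assert (Tq r < (r - q) * r ^ N); [|lra].
  apply Rmult_lt_reg_l with (/ (r - q)). apply Rinv_0_lt_compat; lra.
  rewrite <- Rmult_assoc, Rinv_l, Rmult_1_l by lra. rewrite Rmult_comm. exact HN.
Qed.

Lemma qg_tail x q n : 1 < q -> 0 < x -> (1 <= n)%nat -> (qg_digit x q n < maxdigit q)%nat ->
  lex_le (fun i => qg_digit x q (n + S i)%nat) (fun i => alpha q (S i)).
Proof.
  intros Hq Hx Hn Hlt. destruct (qg_QG x q Hq Hx) as [HQ Hpos].
  destruct (qg_QG 1 q Hq ltac:(lra)) as [HQ1 Hpos1].
  set (rho := path q x (qg_digit x q)) in *.
  assert (Hrn : rho n <= 1).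
  { destruct n as [|n']; [lia|]. destruct (HQ n') as [_ [_ [H3 H4]]].
    destruct H3 as [H3|H3]; [lia|]. rewrite H4. lra. }
  apply (mono q q (maxdigit q) (fun N => rho (n + N)%nat) (path q 1 (alpha q))
          (fun i => qg_digit x q (n + i)%nat) (alpha q)).
  - apply QG_shift, HQ.
  - exact HQ1.
  - lra.
  - lra.
  - rewrite Nat.add_0_r. left; apply Hpos.
  - rewrite Nat.add_0_r. simpl. exact Hrn.
Qed.

Lemma exists_value r c : 1 < r -> (forall i, (1 <= i)%nat -> (c i <= maxdigit r)%nat) -> exists y, ispath r y c.
Proof.
  intros Hr Hc.
  assert (Hg : Un_growing (fun n => Ssum r c (S n))).
  { intro n. destruct (Ssum_bound r c (S n) (S (S n)) Hr Hc ltac:(lia)) as [H _]. exact H. }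
  assert (Hb : has_ub (fun n => Ssum r c (S n))).
  { exists (Tq r). intros z [i ->]. destruct (Ssum_bound r c O (S i) Hr Hc ltac:(lia)) as [_ H].
    change (Ssum r c O) with 0 in H. change (r ^ O) with 1 in H. assert (0 <= Tq r / r ^ S i).
    { apply Rmult_le_pos. assert (H1 := Tq_ge1 r Hr). lra. left; apply Rinv_0_lt_compat, pow_lt; lra. }
    unfold Rdiv in H. rewrite Rinv_1 in H. lra. }
  destruct (growing_cv _ Hg Hb) as [y Hy]. exists y.
  apply exp_iff; [exact Hr|]. split; [exact Hc|].
  intros eps Heps. destruct (Hy eps Heps) as [N HN]. exists N. intros n Hn. rewrite sum_Ssum. auto.
Qed.

Lemma Ssum_const b m N : 1 < b -> Ssum b (fun _ => m) N = INR m / (b - 1) * (1 - / b ^ N).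
Proof.
  intros Hb. induction N as [|N IH]; cbn [Ssum pow].
  - field. lra.
  - rewrite IH. assert (b ^ N <> 0) by (apply pow_nonzero; lra). field. split; lra.
Qed.

Lemma Ssum_cmp q r c m N : 1 < q -> q <= r -> (forall i, (1 <= i)%nat -> (c i <= m)%nat) ->
  0 <= Ssum q c N - Ssum r c N <= Ssum q (fun _ => m) N - Ssum r (fun _ => m) N.
Proof.
  intros Hq Hqr Hc. induction N as [|N IH]; cbn [Ssum]; [lra|].
  assert (Hp : 0 < q ^ S N) by (apply pow_lt; lra).
  assert (Hpp : q ^ S N <= r ^ S N) by (apply pow_incr; lra).
  assert (Hi : / r ^ S N <= / q ^ S N) by (apply Rinv_le_contravar; lra).
  assert (Hd : INR (c (S N)) <= INR m) by (apply le_INR, Hc; lia).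
  assert (Hd0 : 0 <= INR (c (S N))) by apply pos_INR.
  unfold Rdiv. nra.
Qed.

Lemma le_lim (z B C s : R) : 1 < s -> 0 <= C -> (forall N, z <= B + C / s ^ N) -> z <= B.
Proof.
  intros Hs HC H. destruct (Rle_lt_dec z B) as [H1|H1]; [exact H1|exfalso].
  destruct (Req_dec C 0) as [->|HC0].
  { specialize (H O). unfold Rdiv in H. lra. }
  destruct (small_pow s ((z - B) / C) Hs) as [N HN]. { apply Rdiv_lt_0_compat; lra. }
  specialize (HN N (le_n N)). specialize (H N).
  assert (C / s ^ N < z - B); [|lra].
  unfold Rdiv at 1. rewrite Rmult_comm.
  apply Rmult_lt_reg_r with (/ C). apply Rinv_0_lt_compat; lra.
  rewrite Rmult_assoc, Rinv_r, Rmult_1_r by lra. exact HN.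
Qed.

Lemma close_bases q r x y c : 1 < q -> q <= r -> maxdigit q = maxdigit r -> ispath q x c -> ispath r y c ->
  Rabs (x - y) <= Tq q - Tq r.
Proof.
  intros Hq Hqr Hm [Hcq Hpq] [Hcr Hpr].
  assert (Hr : 1 < r) by lra.
  assert (Hb : forall N, Rabs (x - y) <= Tq q - Tq r + Tq r / r ^ N).
  { intro N.
    destruct (Ssum_cmp q r c (maxdigit q) N Hq Hqr Hcq) as [H1 H2].
    rewrite !Ssum_const in H2 by lra.
    specialize (Hpq N). specialize (Hpr N). rewrite path_Ssum in Hpq, Hpr by lra.
    assert (HqN : 0 < q ^ N) by (apply pow_lt; lra). assert (HrN : 0 < r ^ N) by (apply pow_lt; lra).
    assert (Ex1 : 0 <= x - Ssum q c N <= Tq q / q ^ N).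
    { split. apply Rmult_le_reg_l with (q ^ N); lra.
      apply Rmult_le_reg_l with (q ^ N); [lra|]. replace (q ^ N * (Tq q / q ^ N)) with (Tq q) by (field; lra). lra. }
    assert (Ex2 : 0 <= y - Ssum r c N <= Tq r / r ^ N).
    { split. apply Rmult_le_reg_l with (r ^ N); lra.
      apply Rmult_le_reg_l with (r ^ N); [lra|]. replace (r ^ N * (Tq r / r ^ N)) with (Tq r) by (field; lra). lra. }
    unfold Tq in *. rewrite <- Hm in *.
    assert (Hq1 : INR (maxdigit q) / (q - 1) * (1 - / q ^ N) = INR (maxdigit q) / (q - 1) - INR (maxdigit q) / (q - 1) / q ^ N) by (field; lra).
    assert (Hr1 : INR (maxdigit q) / (r - 1) * (1 - / r ^ N) = INR (maxdigit q) / (r - 1) - INR (maxdigit q) / (r - 1) / r ^ N) by (field; lra).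
    assert (INR (maxdigit q) / (r - 1) <= INR (maxdigit q) / (q - 1)).
    { unfold Rdiv. apply Rmult_le_compat_l; [apply pos_INR|]. apply Rinv_le_contravar; lra. }
    apply Rabs_le. lra. }
  apply le_lim with (C := Tq r) (s := r); auto. assert (H := Tq_ge1 r Hr). lra.
Qed.

Lemma zero_U q : 1 < q -> inU 0 q.
Proof.
  intros Hq. destruct (maxdigit_spec q Hq) as [M1 [M2 M3]].
  apply unique_crit with (c := fun _ => O); auto.
  - split; [intros; lia|]. intro N.
    assert (path q 0 (fun _ => O) N = 0).
    { induction N as [|N IH]; cbn [path]; [reflexivity|]. rewrite IH. simpl. lra. }
    rewrite H. assert (H1 := Tq_ge1 q Hq). lra.
  - intros n Hn Hlt. exists O. split; [intros; lia|]. rewrite alpha_1 by exact Hq. lia.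
  - intros; lia.
Qed.

Lemma back_nonint x q : inJ x q -> q < INR (maxdigit q) + 1 ->
  (forall n : nat, (1 <= n)%nat -> (0 < qg_digit x q n)%nat ->
     lex_le (fun i => (alpha q 1 - qg_digit x q (n + 1 + i))%nat) (fun i => alpha q (S i))) ->
  in_closure_U x q.
Proof.
  intros HJ Hnint HC eps Heps.
  destruct (inJ_bounds x q HJ) as [Hq Hx].
  destruct (maxdigit_spec q Hq) as [M1 [M2 M3]].
  set (m := maxdigit q) in *.
  destruct (Req_dec x 0) as [Hx0|Hx0].
  { exists 0, q. split; [apply zero_U; exact Hq|]. rewrite Hx0, !Rminus_diag, Rabs_R0. lra. }
  assert (Hxp : 0 < x) by lra.
  assert (Hm1 : 1 <= INR m) by (change 1 with (INR 1); apply le_INR; exact M3).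
  set (delta := Rmin (Rmin eps (INR m + 1 - q)) (eps * (q - 1) * (q - 1) / (INR m + 1)) / 2).
  assert (Hd0 : 0 < delta).
  { unfold delta. apply Rmult_lt_0_compat; [|lra]. apply Rmin_pos; [apply Rmin_pos; lra|].
    apply Rdiv_lt_0_compat; [|lra]. apply Rmult_lt_0_compat; [|lra]. apply Rmult_lt_0_compat; lra. }
  assert (Hd1 : delta < eps).
  { unfold delta. assert (Rmin (Rmin eps (INR m + 1 - q)) (eps * (q - 1) * (q - 1) / (INR m + 1)) <= eps).
    { eapply Rle_trans; [apply Rmin_l|apply Rmin_l]. } lra. }
  assert (Hd2 : delta < INR m + 1 - q).
  { unfold delta. assert (Rmin (Rmin eps (INR m + 1 - q)) (eps * (q - 1) * (q - 1) / (INR m + 1)) <= INR m + 1 - q).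
    { eapply Rle_trans; [apply Rmin_l|apply Rmin_r]. } lra. }
  assert (Hd3 : delta * (INR m + 1) < eps * (q - 1) * (q - 1)).
  { unfold delta. assert (Rmin (Rmin eps (INR m + 1 - q)) (eps * (q - 1) * (q - 1) / (INR m + 1)) <= eps * (q - 1) * (q - 1) / (INR m + 1)) by apply Rmin_r.
    assert (E : eps * (q - 1) * (q - 1) / (INR m + 1) * (INR m + 1) = eps * (q - 1) * (q - 1)) by (field; lra).
    assert (0 < eps * (q - 1) * (q - 1)) by (apply Rmult_lt_0_compat; [|lra]; apply Rmult_lt_0_compat; lra).
    nra. }
  set (r := q + delta).
  assert (Hr : 1 < r) by (unfold r; lra).
  assert (Hmr : maxdigit r = m) by (apply maxdigit_eq; unfold r; lra).
  set (a := qg_digit x q).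
  assert (Hpa := qg_ispath x q Hq Hx).
  destruct (exists_value r a Hr) as [y Hy].
  { intros i Hi. rewrite Hmr. apply Hpa. exact Hi. }
  exists y, r. split; [|split].
  - apply unique_crit with (c := a); auto.
    + intros n Hn Hlt. rewrite Hmr in Hlt.
      apply lex_le_lt_trans with (fun i => alpha q (S i)).
      * apply qg_tail; auto.
      * apply alpha_strict; [lra|unfold r; lra|rewrite Hmr; reflexivity].
    + intros n Hn Hpos. rewrite Hmr.
      apply lex_le_lt_trans with (fun i => alpha q (S i)).
      * specialize (HC n Hn Hpos). rewrite alpha_1 in HC by exact Hq.
        replace (fun i => (m - a (n + S i))%nat) with (fun i => (maxdigit q - qg_digit x q (n + 1 + i))%nat).
        exact HC. apply functional_extensionality. intro i. unfold a, m. replace (n + 1 + i)%nat with (n + S i)%nat by lia. reflexivity.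
      * apply alpha_strict; [lra|unfold r; lra|rewrite Hmr; reflexivity].
  - assert (Hc := close_bases q r x y a Hq ltac:(unfold r; lra) ltac:(rewrite Hmr; reflexivity) Hpa Hy).
    assert (Tq q - Tq r < eps); [|lra].
    unfold Tq. rewrite Hmr. fold m.
    replace (INR m / (q - 1) - INR m / (r - 1)) with (INR m * delta / ((q - 1) * (r - 1))) by (unfold r; field; lra).
    apply Rmult_lt_reg_r with ((q - 1) * (r - 1)). apply Rmult_lt_0_compat; lra.
    unfold Rdiv. rewrite Rmult_assoc, Rinv_l, Rmult_1_r by (apply Rmult_integral_contrapositive; split; lra).
    assert (eps * (q - 1) * (q - 1) <= eps * ((q - 1) * (r - 1))).
    { rewrite Rmult_assoc. apply Rmult_le_compat_l; [lra|]. apply Rmult_le_compat_l; unfold r; lra. }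
    nra.
  - unfold r. rewrite Rabs_minus_sym. replace (q + delta - q) with delta by ring. rewrite Rabs_pos_eq; lra.
Qed.

Lemma Tq_gt1 q : 1 < q -> q < INR (maxdigit q) + 1 -> 1 < Tq q.
Proof.
  intros Hq Hn. unfold Tq. apply Rmult_lt_reg_r with (q - 1); [lra|].
  unfold Rdiv. rewrite Rmult_assoc, Rinv_l by lra. lra.
Qed.

Lemma V_from_violation x q n : 1 < q -> q < INR (maxdigit q) + 1 -> 0 < x -> (1 <= n)%nat ->
  lt0 (fun i => alpha q (S i)) (fun i => (alpha q 1 - qg_digit x q (n + 1 + i))%nat) ->
  path q x (qg_digit x q) n + 1 < Tq q.
Proof.
  intros Hq Hn Hx Hn1 [k [Hk Hl]].
  rewrite alpha_1 in Hk, Hl by exact Hq.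
  set (m := maxdigit q) in *. set (a := qg_digit x q) in *. set (A := alpha q) in *.
  destruct (qg_QG x q Hq Hx) as [HQ Hpos]. destruct (qg_QG 1 q Hq ltac:(lra)) as [HQ1 Hpos1].
  fold a in HQ, Hpos. change (qg_digit 1 q) with A in HQ1, Hpos1.
  set (rho := path q x a) in *. set (sig := path q 1 A) in *.
  assert (HT1 := Tq_gt1 q Hq Hn). assert (Hfix := Tq_fix q Hq). fold m in Hfix.
  assert (Hdig : forall i, (1 <= i)%nat -> (a i <= m)%nat).
  { intros [|i] Hi; [lia|]. apply HQ. }
  assert (Hw : forall j, path q (Tq q - rho n) (fun i => (m - a (n + i))%nat) j = Tq q - rho (n + j)%nat).
  { intro j. rewrite path_conj with (c := fun i => a (n + i)%nat).
    - unfold rho. rewrite path_shift. reflexivity.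
    - intros i Hi. apply Hdig. lia.
    - exact Hfix. }
  assert (Hdiff : path q (Tq q - rho n) (fun i => (m - a (n + i))%nat) k - path q 1 A k = q ^ k * (Tq q - rho n - 1)).
  { apply path_diff. intros i Hi. destruct i as [|i']; [lia|].
    rewrite (Hk i') by lia. f_equal. f_equal. lia. }
  rewrite Hw in Hdiff. fold sig in Hdiff.
  destruct (HQ (n + k)%nat) as [Ha1 [Ha2 [Ha3 Ha4]]].
  destruct (HQ1 k) as [Hs1 [Hs2 [Hs3 Hs4]]].
  replace (S (n + k)) with (n + 1 + k)%nat in Ha1, Ha2, Ha3 by lia.
  assert (Halt : (a (n + 1 + k) < m)%nat) by lia.
  destruct Ha3 as [Ha3|Ha3]; [lia|].
  destruct Hs3 as [Hs3|Hs3]; [fold A in Hs3; lia|].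
  assert (Hsum : INR (a (n + 1 + k)%nat) + INR (A (S k)) + 1 <= INR m).
  { rewrite <- plus_INR, <- S_INR. apply le_INR. lia. }
  assert (Hkey : q * (Tq q - rho (n + k)%nat - sig k) >= Tq q - 1) by lra.
  rewrite Hdiff in Hkey.
  assert (Hqk : 0 < q ^ k) by (apply pow_lt; lra).
  destruct (Rle_lt_dec (Tq q - rho n - 1) 0) as [Hneg|Hpos2]; [|lra].
  exfalso. assert (q * (q ^ k * (Tq q - rho n - 1)) <= 0); [|lra].
  assert (q ^ k * (Tq q - rho n - 1) <= 0) by nra. nra.
Qed.

Fixpoint Kc (q T : R) (j : nat) : R := match j with O => 1 | S j' => (q + 1) * Kc q T j' + T end.

Lemma Kc_mono q T : 0 < q -> 0 <= T -> forall j n, (j <= n)%nat -> 1 <= Kc q T j <= Kc q T n.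
Proof.
  intros Hq HT.
  assert (H1 : forall j, 1 <= Kc q T j).
  { induction j as [|j IH]; cbn [Kc]; nra. }
  intros j n Hjn. split; [apply H1|]. induction Hjn as [|n Hjn IH]; [lra|].
  cbn [Kc]. specialize (H1 n). nra.
Qed.

Lemma Rabs_le_split z e : Rabs z <= e -> - e <= z <= e.
Proof. unfold Rabs. destruct (Rcase_abs z); intros; lra. Qed.

Lemma Tq_close q r eps : 1 < q -> maxdigit r = maxdigit q -> Rabs (r - q) <= eps -> eps <= (q - 1) / 2 ->
  Rabs (Tq q - Tq r) <= eps * (2 * INR (maxdigit q) / ((q - 1) * (q - 1))).
Proof.
  intros Hq Hm Hrq He. apply Rabs_le_split in Hrq.
  assert (Hr1 : (q - 1) / 2 <= r - 1) by lra.
  unfold Tq. rewrite Hm. set (m := INR (maxdigit q)).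
  assert (Hm0 : 0 <= m) by apply pos_INR.
  set (s := m / ((q - 1) * (r - 1))).
  assert (E : m / (q - 1) - m / (r - 1) = s * (r - q)) by (unfold s; field; lra).
  assert (Hs0 : 0 <= s) by (unfold s; apply Rmult_le_pos; [lra|left; apply Rinv_0_lt_compat, Rmult_lt_0_compat; lra]).
  assert (Hs1 : s <= 2 * m / ((q - 1) * (q - 1))).
  { unfold s. replace (2 * m / ((q - 1) * (q - 1))) with (m / ((q - 1) * ((q - 1) / 2))) by (field; lra).
    unfold Rdiv. apply Rmult_le_compat_l; [lra|]. apply Rinv_le_contravar.
    apply Rmult_lt_0_compat; lra. apply Rmult_le_compat_l; lra. }
  rewrite E. apply Rabs_le. split; nra.
Qed.

Lemma min_pos (rho : nat -> R) : (forall j, 0 < rho j) -> forall n, exists mu, 0 < mu /\ forall j, (j <= n)%nat -> mu <= rho j.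
Proof.
  intros H n. induction n as [|n [mu [Hmu Hmj]]].
  - exists (rho O). split; [apply H|]. intros j Hj. replace j with O by lia. lra.
  - exists (Rmin mu (rho (S n))). split; [apply Rmin_pos; auto|].
    intros j Hj. destruct (Nat.eq_dec j (S n)) as [->|Hne]; [apply Rmin_r|].
    eapply Rle_trans; [apply Rmin_l|]. apply Hmj. lia.
Qed.

Lemma switch x q n : 1 < q -> q < INR (maxdigit q) + 1 -> 0 < x -> x <= Tq q -> (1 <= n)%nat ->
  (0 < qg_digit x q n)%nat -> path q x (qg_digit x q) n + 1 < Tq q -> in_closure_U x q -> False.
Proof.
  intros Hq Hnint Hx HxT Hn1 Han HV Hcl.
  destruct (maxdigit_spec q Hq) as [M1 [M2 M3]].
  set (m := maxdigit q) in *. set (a := qg_digit x q) in *.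
  destruct (qg_QG x q Hq Hx) as [HQ Hpos]. fold a in HQ, Hpos.
  set (rho := path q x a) in *. set (T := Tq q) in *.
  assert (HT1 : 1 < T) by (apply Tq_gt1; auto).
  assert (HrhoT : forall j, rho j <= T) by (apply (QG_le_T q rho a Hq HQ); exact HxT).
  set (delta := T - 1 - rho n).
  assert (Hdelta : 0 < delta) by (unfold delta; lra).
  destruct (min_pos rho Hpos n) as [mu [Hmu Hmuj]].
  assert (Hm0 : 0 <= INR m) by apply pos_INR.
  set (C1 := 2 * INR m / ((q - 1) * (q - 1))).
  assert (HC1 : 0 <= C1) by (unfold C1; apply Rmult_le_pos; [lra|left; apply Rinv_0_lt_compat, Rmult_lt_0_compat; lra]).
  set (theta := Rmin mu (Rmin delta ((T - 1) / 2))).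
  assert (Htheta : 0 < theta) by (apply Rmin_pos; [lra|apply Rmin_pos; lra]).
  assert (Hth1 : theta <= mu) by apply Rmin_l.
  assert (Hth2 : theta <= delta) by (eapply Rle_trans; [apply Rmin_r|apply Rmin_l]).
  assert (Hth3 : theta <= (T - 1) / 2) by (eapply Rle_trans; [apply Rmin_r|apply Rmin_r]).
  assert (HK := Kc_mono q T ltac:(lra) ltac:(lra)).
  set (Kn := Kc q T n).
  assert (HKn : 1 <= Kn) by (apply (HK n n); lia).
  set (eps := Rmin (Rmin 1 ((q - 1) / 2)) (Rmin (Rmin ((q - INR m) / 2) (INR m + 1 - q)) (theta / (Kn + C1)))).
  assert (He1 : eps <= 1) by (eapply Rle_trans; [apply Rmin_l|apply Rmin_l]).
  assert (He2 : eps <= (q - 1) / 2) by (eapply Rle_trans; [apply Rmin_l|apply Rmin_r]).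
  assert (He3 : eps <= (q - INR m) / 2) by (eapply Rle_trans; [apply Rmin_r|]; eapply Rle_trans; [apply Rmin_l|apply Rmin_l]).
  assert (He4 : eps <= INR m + 1 - q) by (eapply Rle_trans; [apply Rmin_r|]; eapply Rle_trans; [apply Rmin_l|apply Rmin_r]).
  assert (He5 : eps <= theta / (Kn + C1)) by (eapply Rle_trans; [apply Rmin_r|apply Rmin_r]).
  assert (Heps : 0 < eps).
  { apply Rmin_pos; apply Rmin_pos; try lra. apply Rmin_pos; lra. apply Rdiv_lt_0_compat; lra. }
  assert (He6 : eps * (Kn + C1) <= theta).
  { apply Rmult_le_reg_r with (/ (Kn + C1)). apply Rinv_0_lt_compat; lra.
    rewrite Rmult_assoc, Rinv_r, Rmult_1_r by lra. exact He5. }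
  destruct (Hcl eps Heps) as [y [r [HU [Hxy Hqr]]]].
  apply Rabs_def2 in Hxy. apply Rabs_def2 in Hqr.
  assert (Hr1 : 1 < r) by lra.
  assert (Hmr : maxdigit r = m) by (apply maxdigit_eq; lra).
  assert (HTr := Tq_close q r eps Hq Hmr ltac:(apply Rabs_le; lra) He2).
  fold m T C1 in HTr. apply Rabs_le_split in HTr.
  set (Tr := Tq r) in *.
  assert (HfixR := Tq_fix r Hr1). rewrite Hmr in HfixR. fold Tr in HfixR.
  destruct HU as [[_ [b Hb]] HUu]. apply exp_iff in Hb; [|exact Hr1].
  assert (HU : inU y r) by (split; [split; [exact Hr1|exists b; apply exp_iff; auto]|exact HUu]).
  destruct Hb as [Hbd Hbp]. fold Tr in Hbp.
  assert (Claim : forall j, (j <= n)%nat -> (forall i, (1 <= i <= j)%nat -> b i = a i) /\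
                   Rabs (path r y b j - rho j) <= eps * Kc q T j).
  { induction j as [|j IH]; intros Hj.
    - split; [intros; lia|]. cbn [path Kc]. unfold rho. simpl. apply Rabs_le. lra.
    - destruct (IH ltac:(lia)) as [IH1 IH2]. apply Rabs_le_split in IH2.
      set (u := path r y b j) in *.
      assert (HKj : Kc q T (S j) <= Kn) by (apply HK; lia).
      assert (HKj' : Kc q T j <= Kn) by (apply HK; lia).
      assert (Hrj := Hpos j). assert (HrjT := HrhoT j).
      set (D := r * u - q * rho j).
      assert (HD : - (eps * Kc q T (S j)) <= D <= eps * Kc q T (S j)).
      { cbn [Kc]. unfold D.
        replace (r * u - q * rho j) with (r * (u - rho j) + (r - q) * rho j) by ring.
        split; nra. }
      destruct (HQ j) as [Ha1 [Ha2 [Ha3 Ha4]]]. fold rho in Ha2, Ha3, Ha4. fold m in Ha1, Ha3.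
      assert (Hadm : 0 <= r * path r y b j - INR (a (S j)) <= Tq r).
      { fold u Tr. assert (HrhoSj : mu <= rho (S j)) by (apply Hmuj; lia).
        split.
        - assert (r * u - INR (a (S j)) = rho (S j) + D) by (unfold D; lra). nra.
        - destruct Ha3 as [Ha3|Ha3].
          + rewrite Ha3. specialize (Hbp j). fold u in Hbp. nra.
          + assert (rho (S j) <= 1) by lra.
            assert (r * u - INR (a (S j)) = rho (S j) + D) by (unfold D; lra). nra. }
      assert (Hf := forced y r b j (a (S j)) HU (conj Hbd Hbp) ltac:(rewrite Hmr; exact Ha1) Hadm).
      split.
      + intros i Hi. destruct (Nat.eq_dec i (S j)) as [->|Hne]; [symmetry; exact Hf|]. apply IH1. lia.
      + cbn [path]. fold u. rewrite <- Hf. apply Rabs_le. unfold D in HD. lra. }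
  destruct n as [|n']; [lia|].
  destruct (Claim (S n') (le_n _)) as [Hc1 Hc2]. destruct (Claim n' ltac:(lia)) as [_ _].
  apply Rabs_le_split in Hc2.
  assert (Hbn : b (S n') = a (S n')) by (apply Hc1; lia).
  assert (Hadm : 0 <= r * path r y b n' - INR (a (S n') - 1) <= Tq r).
  { rewrite minus_INR by lia. change (INR 1) with 1.
    assert (Hu := Hbp (S n')). cbn [path] in Hu, Hc2. rewrite Hbn in Hu, Hc2. fold Tr.
    assert (HKn' : eps * Kn + eps * C1 <= delta) by (rewrite <- Rmult_plus_distr_l; lra).
    unfold delta in HKn'. fold Kn in Hc2. nra. }
  assert (Ham : (a (S n') <= m)%nat) by apply HQ.
  assert (Hf := forced y r b n' (a (S n') - 1) HU (conj Hbd Hbp) ltac:(rewrite Hmr; lia) Hadm).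
  lia.
Qed.

Lemma alpha_prefix r L : 1 < r -> r ^ L * (Tq r - 1) < Tq r ->
  forall i, (1 <= i <= L)%nat -> alpha r i = maxdigit r.
Proof.
  intros Hr HL.
  destruct (qg_QG 1 r Hr ltac:(lra)) as [HQ _]. change (qg_digit 1 r) with (alpha r) in HQ.
  set (sig := path r 1 (alpha r)) in *.
  assert (HT := Tq_ge1 r Hr). assert (Hfix := Tq_fix r Hr).
  assert (Cl : forall j, (j <= L)%nat -> sig j = Tq r - r ^ j * (Tq r - 1) /\
                 forall i, (1 <= i <= j)%nat -> alpha r i = maxdigit r).
  { induction j as [|j IH]; intros Hj.
    - split; [unfold sig; simpl; lra|intros; lia].
    - destruct (IH ltac:(lia)) as [IH1 IH2].
      assert (Hpj : r ^ S j <= r ^ L) by (apply Rle_pow; [lra|lia]).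
      assert (Hgt : INR (maxdigit r) < r * sig j).
      { rewrite IH1. simpl pow in Hpj. nra. }
      destruct (HQ j) as [H1 [H2 [H3 H4]]].
      assert (Hd : alpha r (S j) = maxdigit r).
      { destruct H3 as [H3|H3]; [exact H3|].
        destruct (Nat.eq_dec (alpha r (S j)) (maxdigit r)) as [E|E]; [exact E|exfalso].
        assert (INR (alpha r (S j)) + 1 <= INR (maxdigit r)) by (rewrite <- S_INR; apply le_INR; lia). lra. }
      split.
      + rewrite H4, Hd, IH1. simpl pow. lra.
      + intros i Hi. destruct (Nat.eq_dec i (S j)) as [->|Hne]; [exact Hd|]. apply IH2. lia. }
  intros i Hi. apply (proj2 (Cl L (le_n L))). exact Hi.
Qed.

Lemma mod_facts K n : (2 <= K)%nat -> exists p, (n + 2 <= p <= n + 1 + K)%nat /\ p mod K = O /\ (p - 1) mod K <> O.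
Proof.
  intros HK. set (t := ((n + 1) / K)%nat). set (s := ((n + 1) mod K)%nat).
  assert (E : (n + 1 = K * t + s)%nat) by (apply Nat.div_mod; lia).
  assert (Hs : (s < K)%nat) by (apply Nat.mod_upper_bound; lia).
  exists ((t + 1) * K)%nat. split; [nia|]. split.
  - apply Nat.mod_mul. lia.
  - replace ((t + 1) * K - 1)%nat with ((K - 1) + t * K)%nat by nia.
    rewrite Nat.mod_add by lia. rewrite Nat.mod_small by lia. lia.
Qed.

Lemma back_int x q : inJ x q -> q = INR (maxdigit q) + 1 -> in_closure_U x q.
Proof.
  intros HJ Hint eps Heps.
  destruct (inJ_bounds x q HJ) as [Hq Hx].
  destruct (maxdigit_spec q Hq) as [M1 [M2 M3]].
  set (m := maxdigit q) in *.
  assert (Hm1 : 1 <= INR m) by (change 1 with (INR 1); apply le_INR; exact M3).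
  assert (HTq : Tq q = 1) by (unfold Tq; fold m; rewrite Hint; field; lra).
  set (a := qg_digit x q).
  assert (Ha := qg_ispath x q Hq Hx). fold a in Ha.
  destruct (small_pow q (eps / 2) Hq ltac:(lra)) as [N HN].
  set (K := (N + 2)%nat).
  set (c := fun i => if (i mod K =? 0)%nat then (if (a (i - 1)%nat =? 0)%nat then 1%nat else 0%nat) else a i).
  assert (Hcm : forall i, (1 <= i)%nat -> (c i <= m)%nat).
  { intros i Hi. unfold c. destruct (i mod K =? 0)%nat; [destruct (a (i - 1)%nat =? 0)%nat; lia|]. apply Ha. exact Hi. }
  destruct (exists_value q c Hq Hcm) as [x' Hx'].
  assert (Hxx' : Rabs (x - x') <= / q ^ (N + 1)).
  { assert (Hd := path_diff q x x' a c (N + 1) ltac:(intros i Hi; unfold c;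
      rewrite Nat.mod_small by (unfold K; lia); destruct (Nat.eqb_spec i 0); [lia|reflexivity])).
    destruct Ha as [_ Hpa]. destruct Hx' as [_ Hpc]. specialize (Hpa (N + 1)%nat). specialize (Hpc (N + 1)%nat).
    rewrite HTq in Hpa, Hpc.
    assert (HqN : 0 < q ^ (N + 1)) by (apply pow_lt; lra).
    apply Rabs_le. split.
    - apply Rmult_le_reg_l with (q ^ (N + 1)); [lra|]. rewrite <- Hd.
      replace (q ^ (N + 1) * - / q ^ (N + 1)) with (-1) by (field; lra). lra.
    - apply Rmult_le_reg_l with (q ^ (N + 1)); [lra|]. rewrite <- Hd.
      replace (q ^ (N + 1) * / q ^ (N + 1)) with 1 by (field; lra). lra. }
  assert (HN1 : / q ^ (N + 1) < eps / 2) by (apply HN; lia).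
  set (L := (K + 1)%nat).
  assert (HqL : 0 < q ^ L) by (apply pow_lt; lra).
  set (eta := Rmin (1 / 2) (Rmin (eps / 8) (/ (4 * q ^ L)))).
  assert (Heta0 : 0 < eta).
  { apply Rmin_pos; [lra|apply Rmin_pos; [lra|apply Rinv_0_lt_compat; lra]]. }
  assert (Heta1 : eta <= 1 / 2) by apply Rmin_l.
  assert (Heta2 : eta <= eps / 8) by (eapply Rle_trans; [apply Rmin_r|apply Rmin_l]).
  assert (Heta3 : eta <= / (4 * q ^ L)) by (eapply Rle_trans; [apply Rmin_r|apply Rmin_r]).
  set (r := q - eta).
  assert (Hr : 1 < r) by (unfold r; lra).
  assert (Hmr : maxdigit r = m) by (apply maxdigit_eq; unfold r; lra).
  assert (HTr : Tq r - 1 = eta / (INR m - eta)).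
  { unfold Tq. rewrite Hmr. unfold r. rewrite Hint. field. lra. }
  assert (HTr2 : Tq r - 1 <= 2 * eta).
  { rewrite HTr. apply Rmult_le_reg_r with (INR m - eta); [lra|].
    unfold Rdiv. rewrite Rmult_assoc, Rinv_l, Rmult_1_r by lra. nra. }
  assert (HTr0 : 0 <= Tq r - 1) by (rewrite HTr; apply Rmult_le_pos; [lra|left; apply Rinv_0_lt_compat; lra]).
  assert (HrL : r ^ L <= q ^ L) by (apply pow_incr; unfold r; lra).
  assert (Hpref : forall i, (1 <= i <= L)%nat -> alpha r i = m).
  { rewrite <- Hmr. apply alpha_prefix; [exact Hr|].
    assert (q ^ L * (2 * eta) <= 1 / 2).
    { assert (q ^ L * eta <= q ^ L * / (4 * q ^ L)) by (apply Rmult_le_compat_l; lra).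
      replace (q ^ L * / (4 * q ^ L)) with (1 / 4) in H by (field; lra). lra. }
    assert (r ^ L * (Tq r - 1) <= q ^ L * (2 * eta)).
    { apply Rmult_le_compat; try lra. apply pow_le; lra. }
    lra. }
  assert (HcR : forall i, (1 <= i)%nat -> (c i <= maxdigit r)%nat) by (rewrite Hmr; exact Hcm).
  destruct (exists_value r c Hr HcR) as [y Hy].
  exists y, r. split; [|split].
  - apply unique_crit with (c := c); [exact Hr|exact Hy| |].
    + intros n Hn _.
      destruct (mod_facts K n ltac:(unfold K; lia)) as [p [Hp1 [Hp2 Hp3]]].
      assert (Hex : exists i, c (n + S i)%nat <> m /\ (i <= K)%nat).
      { assert (Ecp : c p = (if (a (p - 1)%nat =? 0)%nat then 1%nat else 0%nat)).
        { unfold c. rewrite Hp2. reflexivity. }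
        assert (Ecp1 : c (p - 1)%nat = a (p - 1)%nat).
        { unfold c. destruct (Nat.eqb_spec ((p - 1) mod K) 0); [contradiction|reflexivity]. }
        destruct (Nat.eq_dec (a (p - 1)%nat) m) as [E|E].
        - exists (p - n - 1)%nat. split; [|lia]. replace (n + S (p - n - 1))%nat with p by lia.
          rewrite Ecp. destruct (Nat.eqb_spec (a (p - 1)%nat) 0); lia.
        - exists (p - n - 2)%nat. split; [|lia]. replace (n + S (p - n - 2))%nat with (p - 1)%nat by lia.
          rewrite Ecp1. exact E. }
      destruct (ex_min (fun i => c (n + S i)%nat <> m)) as [k [Hk Hkmin]].
      { destruct Hex as [i [Hi _]]. exists i. exact Hi. }
      assert (HkK : (k <= K)%nat).
      { destruct Hex as [i [Hi HiK]]. destruct (Nat.le_gt_cases k i) as [H|H]; [lia|].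
        exfalso. apply (Hkmin i H). exact Hi. }
      exists k. split.
      * intros i Hi. rewrite Hpref by (unfold L; lia). apply NNPP. apply Hkmin. exact Hi.
      * rewrite Hpref by (unfold L; lia). assert (c (n + S k)%nat <= m)%nat by (apply Hcm; lia). lia.
    + intros n Hn _. rewrite Hmr.
      destruct (mod_facts K n ltac:(unfold K; lia)) as [p [Hp1 [Hp2 Hp3]]].
      assert (Hex : exists i, c (n + S i)%nat <> O /\ (i <= K)%nat).
      { assert (Ecp : c p = (if (a (p - 1)%nat =? 0)%nat then 1%nat else 0%nat)).
        { unfold c. rewrite Hp2. reflexivity. }
        assert (Ecp1 : c (p - 1)%nat = a (p - 1)%nat).
        { unfold c. destruct (Nat.eqb_spec ((p - 1) mod K) 0); [contradiction|reflexivity]. }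
        destruct (Nat.eq_dec (a (p - 1)%nat) O) as [E|E].
        - exists (p - n - 1)%nat. split; [|lia]. replace (n + S (p - n - 1))%nat with p by lia.
          rewrite Ecp. rewrite E. simpl. lia.
        - exists (p - n - 2)%nat. split; [|lia]. replace (n + S (p - n - 2))%nat with (p - 1)%nat by lia.
          rewrite Ecp1. exact E. }
      destruct (ex_min (fun i => c (n + S i)%nat <> O)) as [k [Hk Hkmin]].
      { destruct Hex as [i [Hi _]]. exists i. exact Hi. }
      assert (HkK : (k <= K)%nat).
      { destruct Hex as [i [Hi HiK]]. destruct (Nat.le_gt_cases k i) as [H|H]; [lia|].
        exfalso. apply (Hkmin i H). exact Hi. }
      exists k. split.
      * intros i Hi. rewrite Hpref by (unfold L; lia). assert (c (n + S i)%nat = O) by (apply NNPP; apply Hkmin; exact Hi). lia.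
      * rewrite Hpref by (unfold L; lia). assert (c (n + S k)%nat <= m)%nat by (apply Hcm; lia). lia.
  - assert (Hc := close_bases r q y x' c Hr ltac:(unfold r; lra) ltac:(rewrite Hmr; reflexivity) Hy Hx').
    rewrite HTq in Hc.
    assert (Rabs (x - y) <= Rabs (x - x') + Rabs (x' - y)).
    { replace (x - y) with ((x - x') + (x' - y)) by ring. apply Rabs_triang. }
    rewrite Rabs_minus_sym in Hc. lra.
  - unfold r. replace (q - (q - eta)) with eta by ring. rewrite Rabs_pos_eq; lra.
Qed.

Theorem theorem1p2 (x q : R) :
  inJ x q ->
  (in_closure_U x q <->
   forall n : nat, (1 <= n)%nat -> (0 < qg_digit x q n)%nat ->
     lex_le (fun i => (alpha q 1 - qg_digit x q (n + 1 + i))%nat)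
            (fun i => alpha q (S i))).
Proof.
  intros HJ. destruct (inJ_bounds x q HJ) as [Hq Hx].
  destruct (maxdigit_spec q Hq) as [M1 [M2 M3]].
  destruct (Req_dec q (INR (maxdigit q) + 1)) as [Hint|Hnint].
  - split.
    + intros _ n Hn Ha.
      destruct (lex_total (fun i => (alpha q 1 - qg_digit x q (n + 1 + i))%nat) (fun i => alpha q (S i)))
        as [H|[k [_ Hk]]]; [exact H|exfalso].
      rewrite !(alpha_int q Hq Hint) in Hk by lia. lia.
    + intros _. apply back_int; auto.
  - assert (Hnint' : q < INR (maxdigit q) + 1) by lra. split.
    + intros Hcl n Hn Ha.
      destruct (lex_total (fun i => (alpha q 1 - qg_digit x q (n + 1 + i))%nat) (fun i => alpha q (S i)))
        as [H|H]; [exact H|exfalso].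
      assert (Hx0 : 0 < x).
      { destruct (Req_dec x 0) as [E|E]; [|lra]. rewrite E, qg_zero in Ha. lia. }
      apply (switch x q n Hq Hnint' Hx0 (proj2 Hx) Hn Ha); [|exact Hcl].
      apply V_from_violation; auto.
    + intros HC. apply back_nonint; auto.
Qed.
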